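(* Let $p>3$ be a prime and $k\ge1$. Then there exists an automorphism $\phi$ of the restricted wreath product $\mathbb{Z}_p\,\mathrm{wr}\,\mathbb{Z}^k$ with finite Reidemeister number $R(\phi)$. In particular, $\mathbb{Z}_p\,\mathrm{wr}\,\mathbb{Z}^k$ does not have the property $R_\infty$.
   Context: For an automorphism $\phi$ of a group $G$, $R(\phi)$ is the number of classes of the relation $g\sim hg\phi(h^{-1})$, $h,g\in G$. A group has property $R_\infty$ if $R(\phi)=\infty$ for every automorphism. $\mathbb{Z}_p\,\mathrm{wr}\,\mathbb{Z}^k=\left(\bigoplus_{x\in\mathbb{Z}^k}A_x\right)\rtimes_\alpha\mathbb{Z}^k$, with $A_x\cong\mathbb{Z}_p$ generated by $\delta_x$, finitely supported direct sum, and $\alpha(y)(\delta_x)=\delta_{y+x}$. *)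

(* Defs.v *)
From mathcomp Require Import all_boot all_algebra.
From Stdlib Require Lists.List.
Set Implicit Arguments. Unset Strict Implicit. Unset Printing Implicit Defensive.
Import GRing.Theory.
Local Open Scope ring_scope.

(* Z_p wr Z^k = (finitely supported functions Z^k -> Z_p) ⋊ Z^k.  The generator delta_x of A_x corresponds to the
   indicator function of x.  alpha(y) delta_x = delta_(y+x), i.e.
   (alpha(y) g)(w) = g (w - y).  Product: (f,y)(g,z) = (f + alpha(y) g, y + z). *)

Definition wr_elt (p k : nat) := (('rV[int]_k -> 'Z_p) * 'rV[int]_k)%type.

Definition fin_supp (p k : nat) (f : 'rV[int]_k -> 'Z_p) : Prop :=
  exists s : seq 'rV[int]_k, forall x, x \notin s -> f x = 0.

Definition in_wr (p k : nat) (g : wr_elt p k) : Prop := fin_supp g.1.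

Definition wr_mul (p k : nat) (g h : wr_elt p k) : wr_elt p k :=
  (fun x => g.1 x + h.1 (x - g.2), g.2 + h.2).

Definition wr_inv (p k : nat) (g : wr_elt p k) : wr_elt p k :=
  (fun x => - g.1 (x + g.2), - g.2).

Definition wr_aut (p k : nat) (phi : wr_elt p k -> wr_elt p k) : Prop :=
  [/\ (forall g, in_wr g -> in_wr (phi g)),
      (forall g h, in_wr g -> in_wr h -> phi g = phi h -> g = h),
      (forall h, in_wr h -> exists g, in_wr g /\ phi g = h) &
      (forall g h, in_wr g -> in_wr h -> phi (wr_mul g h) = wr_mul (phi g) (phi h))].

Definition twisted_conj (p k : nat) (phi : wr_elt p k -> wr_elt p k)
  (g g' : wr_elt p k) : Prop :=
  exists h, in_wr h /\ g' = wr_mul (wr_mul h g) (phi (wr_inv h)).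

Definition reidemeister_finite (p k : nat) (phi : wr_elt p k -> wr_elt p k) : Prop :=
  exists s : seq (wr_elt p k),
    (forall r, Stdlib.Lists.List.In r s -> in_wr r) /\
    (forall g, in_wr g -> exists2 r, Stdlib.Lists.List.In r s & twisted_conj phi g r).

Definition has_R_infty (p k : nat) : Prop :=
  forall phi : wr_elt p k -> wr_elt p k, wr_aut phi -> ~ reidemeister_finite phi.

(* Main.v *)
Require Import Defs.
From mathcomp Require Import all_boot all_algebra.
From mathcomp Require Import ring zify.
From Stdlib Require Import FunctionalExtensionality.
Set Implicit Arguments. Unset Strict Implicit. Unset Printing Implicit Defensive.
Import GRing.Theory.
Local Open Scope ring_scope.

Section S.
Variables (p k : nat).
Hypothesis (hp : prime p) (hp3 : (3 < p)%N).

Lemma unit_nat (m : nat) : (0 < m < p)%N -> (m%:R : 'Z_p) \is a GRing.unit.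
Proof.
move=> /andP[m0 mp]; rewrite unitZpE ?prime_gt1 // prime_coprime //.
by apply/negP => /(dvdn_leq m0); rewrite leqNgt mp.
Qed.

Definition cc : 'Z_p := 2%:R.
Definition dd : 'Z_p := (- 3%:R)^-1.

Lemma cc_unit : cc \is a GRing.unit.
Proof. by apply: unit_nat; apply/andP; split => //; apply: leq_trans hp3. Qed.

Lemma dd_prop : dd * (1 - cc * cc) = 1.
Proof.
have h3 : (3%:R : 'Z_p) \is a GRing.unit by apply: unit_nat; apply/andP; split.
have -> : 1 - cc * cc = - 3%:R by rewrite /cc -natrM -[1]/(1%:R) ; ring.
by rewrite /dd mulVr // unitrN.
Qed.

Definition phi0 (g : wr_elt p k) : wr_elt p k := (fun x => cc * g.1 (- x), - g.2).

Lemma supp_neg (f : 'rV[int]_k -> 'Z_p) : fin_supp f -> fin_supp (fun x => f (- x)).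
Proof.
case=> s hs; exists (map -%R s) => x hx; apply: hs; apply: contra hx => h.
by rewrite -[x]opprK map_f.
Qed.

Lemma phi0_aut : wr_aut phi0.
Proof.
split.
- move=> [f y] /= hf; case: (supp_neg hf) => s hs; exists s => x hx /=.
  by move: (hs x hx) => /= ->; rewrite mulr0.
- move=> [f y] [g z] _ _ [E1 E2].
  have ey : y = z by apply: oppr_inj.
  rewrite ey; congr pair; apply: functional_extensionality => x.
  have := congr1 (fun F => F (- x)) E1 => /=; rewrite opprK.
  by apply: mulrI; apply: cc_unit.
- move=> [f y] hf; exists (fun x => cc^-1 * f (- x), - y); split.
    case: (supp_neg hf) => s hs; exists s => x hx /=; by move: (hs x hx) => /= ->; rewrite mulr0.
  rewrite /phi0 /= opprK; congr pair; apply: functional_extensionality => x.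
  by rewrite opprK mulrA mulrV ?mul1r //; apply: cc_unit.
- move=> [f y] [g z] _ _; rewrite /phi0 /wr_mul /=; congr pair.
    apply: functional_extensionality => x; rewrite mulrDr; congr (_ + _).
    rewrite /=; congr (_ * g _); by rewrite opprK opprD.
  by rewrite opprD.
Qed.


Lemma In_map (A B : Type) (f : A -> B) (s : seq A) x :
  List.In x s -> List.In (f x) (map f s).
Proof. elim: s => //= a s IH [->|h]; [left|right; apply: IH] => //. Qed.

Lemma mem_In (A : eqType) (s : seq A) x : x \in s -> List.In x s.
Proof. elim: s => //= a s IH; rewrite in_cons => /orP[/eqP ->|h]; [left|right; apply: IH] => //. Qed.

Definition reps : seq (wr_elt p k) :=
  [seq ((fun _ => 0), map_mx (fun b : bool => ((b : nat)%:Z)) m) | m <- enum 'M[bool]_(1,k)].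

Lemma reps_ok : forall g : wr_elt p k, in_wr g -> exists2 r, List.In r reps & twisted_conj phi0 g r.
Proof.
move=> [f y] [sf hsf]; rewrite /= in hsf.
pose u : 'rV[int]_k := \row_j (- ((y ord0 j) %/ 2)%Z).
pose w := u + y + u.
pose m : 'M[bool]_(1,k) := \row_j (((y ord0 j) %% 2)%Z == 1).
have Ew : map_mx (fun b : bool => ((b : nat)%:Z)) m = w.
  apply/matrixP => i j; rewrite !mxE; have -> : i = ord0 by apply: ord1.
  have hy := divz_eq (y ord0 j) 2.
  have r0 : (0 <= ((y ord0 j) %% 2)%Z)%R by apply: modz_ge0.
  have r2 : (((y ord0 j) %% 2)%Z < 2)%R by apply: ltz_pmod.
  move: hy r0 r2; set q := ((y ord0 j) %/ 2)%Z; set r := ((y ord0 j) %% 2)%Z; set z := y ord0 j.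
  case: eqP => [->|hne] /= hy r0 r2.
  lia. lia.
pose F x := - f (x - u).
pose a x := dd * (F x + cc * F (w - x)).
exists ((fun _ => 0), map_mx (fun b : bool => ((b : nat)%:Z)) m).
  by apply: In_map; apply: mem_In; rewrite mem_enum.
exists (a, u); split.
  pose S1 := map (fun z => z + u) sf.
  exists (S1 ++ map (fun z => w - z) S1) => x; rewrite mem_cat negb_or => /andP[h1 h2].
  have F0 : forall z, z \notin S1 -> F z = 0.
    move=> z hz; rewrite /F hsf ?oppr0 //; apply: contra hz => hz.
    rewrite /S1 -[z](subrK u); exact: (map_f (fun z0 => z0 + u) hz).
  rewrite /= /a (F0 x h1) F0 ?mulr0 ?addr0 //; last apply: contra h2 => h2; first by rewrite mulr0.
  rewrite -[x](subKr w); exact: (map_f (fun z0 => w - z0) h2).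
rewrite /wr_mul /wr_inv /phi0 /= Ew; congr pair.
  apply: functional_extensionality => x.
  have E : -(x - (u+y)) + u = w - x by rewrite /w opprB addrAC.
  rewrite E /a subKr /F.
  move: (f (x - u)) (f (w - x - u)) => A B.
  transitivity (A * (1 - dd * (1 - cc * cc))); first by rewrite dd_prop subrr mulr0.
  ring.
by rewrite opprK.
Qed.

End S.

Theorem theorem3p5 (p k : nat) (hp : prime p) (hp3 : (3 < p)%N) (hk : (1 <= k)%N) :
  (exists phi : wr_elt p k -> wr_elt p k, wr_aut phi /\ reidemeister_finite phi)
  /\ ~ has_R_infty p k.
Proof.
have H : exists phi : wr_elt p k -> wr_elt p k, wr_aut phi /\ reidemeister_finite phi.
  exists (@phi0 p k); split; first exact: phi0_aut.
  exists (@reps p k); split; last exact: reps_ok.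
  move=> r /List.in_map_iff [m [<- _]]; by exists [::].
split => //; case: H => phi [ha hr] hR; exact: (hR phi ha hr).
Qed.
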